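(* Let $\mathcal{G}=(\mathcal{V},\mathcal{A})$, $|\mathcal{V}|=n$, be the information-flow graph of a single-sender single-uniprior index-coding instance in which every message consists of a single bit ($q_i=1$ for all $i$). Then \[ \ell^*(\mathcal{G}) = n - |\mathcal{L}(\mathcal{G})| - N_{\mathrm{SCC}}(\mathcal{G}), \] where $N_{\mathrm{SCC}}(\mathcal{G})$ is the number of leaf SCCs of $\mathcal{G}$.
   Context: Single-sender single-uniprior index coding: there are $n$ receivers and $n$ independent messages $x_1,\dots,x_n$; message $x_i$ consists of $q_i\ge 1$ bits, each independently uniformly distributed on $\{0,1\}$. A single sender knows all messages. Receiver $i$ knows $x_i$ a priori and requests a set $\mathcal{W}_i$ of messages with $x_i\notin\mathcal{W}_i$. The information-flow graph is the directed graph $\mathcal{G}=(\mathcal{V},\mathcal{A})$ with $\mathcal{V}=\{1,\dots,n\}$ and an arc $(j\to i)\in\mathcal{A}$ iff $x_j\in\mathcal{W}_i$. An index code of length $\ell$ consists of an encoding function $E:\{0,1\}^{\sum_i q_i}\to\{0,1\}^\ell$ and, for each receiver $i$, a decoding function $D_i$ such that $D_i(E(x_1,\dots,x_n),x_i)$ equals the tuple of messages in $\mathcal{W}_i$ for all values of the messages. $\ell^*(\mathcal{G})$ denotes the minimum length of an index code. A leaf vertex is a vertex with no outgoing arcs; $\mathcal{L}(\mathcal{G})$ is the set of leaf vertices. A strongly connected component (SCC) is a maximal subgraph in which every ordered pair of vertices is joined by a directed path inside the subgraph. A leaf SCC is an SCC with at least two vertices from which no arc goes to a vertex outside the SCC.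 *)

(* Defs.v *)
From mathcomp Require Import all_boot.
Set Implicit Arguments. Unset Strict Implicit. Unset Printing Implicit Defensive.

(* Information-flow graph on vertex set 'I_n given as a relation:
   G j i = true  iff  there is an arc (j -> i), i.e. x_j \in W_i. *)

(* Messages with q_i = 1: a message assignment is one bit per receiver. *)
Definition messages (n : nat) := {ffun 'I_n -> bool}.

(* An index code of length l: encoder E into l-bit strings and, for each
   receiver i, a decoder D i taking the codeword and the side information
   x_i, returning values of the messages; it must return the correct value
   x_j for every requested message x_j \in W_i (i.e. every arc j -> i).
   The decoder output is modelled as a function on 'I_n of which only the
   coordinates in W_i are constrained (= the tuple of requested messages). *)
Definition is_index_code (n : nat) (G : rel 'I_n) (l : nat)
    (E : messages n -> l.-tuple bool)
    (D : 'I_n -> l.-tuple bool -> bool -> 'I_n -> bool) : Prop :=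
  forall (x : messages n) (i j : 'I_n), G j i -> D i (E x) (x i) j = x j.

Definition has_index_code (n : nat) (G : rel 'I_n) (l : nat) : Prop :=
  exists E D, @is_index_code n G l E D.

Definition is_min_code_length (n : nat) (G : rel 'I_n) (k : nat) : Prop :=
  has_index_code G k /\ (forall l, has_index_code G l -> k <= l).

Definition leaves (n : nat) (G : rel 'I_n) : {set 'I_n} :=
  [set v | [forall u, ~~ G v u]].

Definition scc_rel (n : nat) (G : rel 'I_n) (u v : 'I_n) : bool :=
  connect G u v && connect G v u.

Definition scc_of (n : nat) (G : rel 'I_n) (u : 'I_n) : {set 'I_n} :=
  [set v | scc_rel G u v].

Definition is_leaf_scc (n : nat) (G : rel 'I_n) (C : {set 'I_n}) : bool :=
  [&& [exists u, C == scc_of G u], 1 < #|C| &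
      [forall u, forall v, (u \in C) && G u v ==> (v \in C)]].

Definition N_SCC (n : nat) (G : rel 'I_n) : nat :=
  #|[set C : {set 'I_n} | is_leaf_scc G C]|.

(* Main.v *)
Require Import Defs.
From mathcomp Require Import all_boot.
Set Implicit Arguments. Unset Strict Implicit. Unset Printing Implicit Defensive.

Definition rep (n : nat) (G : rel 'I_n) (u : 'I_n) : 'I_n :=
  odflt u [pick v in scc_of G u].
Definition bl (n : nat) (G : rel 'I_n) (u : 'I_n) : bool :=
  is_leaf_scc G (scc_of G u).
Definition Rs (n : nat) (G : rel 'I_n) : {set 'I_n} :=
  [set u | bl G u && (rep G u == u)].
Definition Ts (n : nat) (G : rel 'I_n) : {set 'I_n} := leaves G :|: Rs G.

Lemma in_scc_self n (G : rel 'I_n) u : u \in scc_of G u.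
Proof. by rewrite inE /scc_rel connect0. Qed.

Lemma scc_eq n (G : rel 'I_n) u v : scc_rel G u v -> scc_of G u = scc_of G v.
Proof.
case/andP=> Huv Hvu; apply/setP=> w; rewrite !inE /scc_rel.
apply/andP/andP=> [[H1 H2]|[H1 H2]]; split.
- exact: connect_trans Hvu H1.
- exact: connect_trans H2 Huv.
- exact: connect_trans Huv H1.
- exact: connect_trans H2 Hvu.
Qed.

Lemma rep_in n (G : rel 'I_n) u : rep G u \in scc_of G u.
Proof.
rewrite /rep; case: pickP => [v Hv //|H0].
by have := H0 u; rewrite /= in_scc_self.
Qed.

Lemma rep_eq n (G : rel 'I_n) u v : scc_of G u = scc_of G v -> rep G u = rep G v.
Proof.
move=> H; rewrite /rep H; case: pickP => [//|H0].
by have := H0 v; rewrite /= in_scc_self.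
Qed.

Lemma scc_rep n (G : rel 'I_n) u : scc_of G (rep G u) = scc_of G u.
Proof. by symmetry; apply: scc_eq; have := rep_in G u; rewrite inE. Qed.

Lemma rep_rep n (G : rel 'I_n) u : rep G (rep G u) = rep G u.
Proof. exact: rep_eq (scc_rep G u). Qed.

Lemma bl_rep n (G : rel 'I_n) u : bl G (rep G u) = bl G u.
Proof. by rewrite /bl scc_rep. Qed.

Lemma connect_arc n (G : rel 'I_n) u v : connect G u v -> u != v -> exists w, G u w.
Proof.
move/connectP=> [[|w p] /= Hp Hl]; first by rewrite Hl eqxx.
by case/andP: Hp => Hw _; exists w.
Qed.

Lemma bl_notleaf n (G : rel 'I_n) u : bl G u -> u \notin leaves G.
Proof.
case/and3P=> _ Hc _.
have [v Hv Hne] : exists2 v, v \in scc_of G u & v != u.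
  case/card_gt1P: Hc => [x [y [Hx Hy Hxy]]].
  case: (eqVneq x u) => [Exu|Hxu]; last by exists x.
  by exists y => //; rewrite -Exu eq_sym.
move: Hv; rewrite inE /scc_rel => /andP [Huv _].
have Hne' : u != v by rewrite eq_sym.
have [w Hw] := connect_arc Huv Hne'.
apply/negP; rewrite inE => /forallP /(_ w); by rewrite Hw.
Qed.

Lemma bl_closed n (G : rel 'I_n) u v : bl G u -> G u v -> scc_of G v = scc_of G u.
Proof.
case/and3P=> _ _ /forallP Hcl Huv.
have Hv : v \in scc_of G u.
  by have := Hcl u; move/forallP/(_ v); rewrite in_scc_self Huv /= => ->.
by symmetry; apply: scc_eq; move: Hv; rewrite inE.
Qed.

Lemma card_Rs n (G : rel 'I_n) : #|Rs G| = N_SCC G.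
Proof.
rewrite /N_SCC.
have -> : [set C | is_leaf_scc G C] = [set scc_of G u | u in Rs G].
  apply/setP=> C; rewrite inE; apply/idP/imsetP.
  - move=> HC; have := HC; case/and3P=> /existsP [u0 /eqP EC] _ _.
    exists (rep G u0); last by rewrite scc_rep.
    by rewrite inE bl_rep rep_rep eqxx /bl -EC HC.
  - by case=> u; rewrite inE => /andP [Hb _] ->.
rewrite card_in_imset //.
move=> u v; rewrite !inE => /andP [_ /eqP Hu] /andP [_ /eqP Hv] E.
by rewrite -Hu -Hv; apply: rep_eq.
Qed.

Lemma card_Ts n (G : rel 'I_n) : #|Ts G| = #|leaves G| + N_SCC G.
Proof.
rewrite /Ts cardsU -card_Rs.
have -> : leaves G :&: Rs G = set0.
  apply/setP=> u; rewrite !inE; apply/negP=> /andP [Hl /andP [Hb _]].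
  by move: (bl_notleaf Hb); rewrite inE Hl.
by rewrite cards0 subn0.
Qed.

Lemma card_F n (G : rel 'I_n) : #|~: Ts G| = n - #|leaves G| - N_SCC G.
Proof.
have := cardsC (Ts G); rewrite card_ord -subnDA -card_Ts.
move: #|Ts G| #|~: Ts G| => a b H; apply/eqP.
by rewrite -H addKn.
Qed.

Lemma reach_T n (G : rel 'I_n) (G_irrefl : forall i : 'I_n, ~~ G i i) v :
  exists2 t, t \in Ts G & connect G v t.
Proof.
pose reach w := [set z | connect G w z].
case: (@arg_minnP _ v (fun w => connect G v w) (fun w => #|reach w|) (connect0 G v))
  => w Hvw Hmin.
have Hback : forall z, connect G w z -> connect G z w.
  move=> z Hwz.
  have Hsub : reach z \subset reach w.
    by apply/subsetP=> y; rewrite !inE => Hzy; apply: connect_trans Hwz Hzy.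
  have Hle := Hmin z (connect_trans Hvw Hwz).
  have /eqP Eq : reach z == reach w by rewrite eqEcard Hsub Hle.
  have : w \in reach z by rewrite Eq inE connect0.
  by rewrite inE.
case: (boolP [exists z, G w z]) => [/existsP [z Hz]|Hno].
- exists (rep G w); last by apply: connect_trans Hvw _; have := rep_in G w; rewrite inE => /andP [].
  have Hb : bl G w.
    apply/and3P; split.
    + by apply/existsP; exists w.
    + apply/card_gt1P; exists w, z; split; first exact: in_scc_self.
      * by rewrite inE /scc_rel connect1 //= Hback // connect1.
      * by apply/eqP=> E; move: Hz; rewrite -E; move: (G_irrefl w) => /negP.
    + apply/forallP=> u; apply/forallP=> y; apply/implyP=> /andP [].
      rewrite !inE /scc_rel => /andP [Hwu _] Huy.
      have Hwy : connect G w y by apply: connect_trans Hwu (connect1 Huy).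
      by rewrite Hwy Hback.
  by rewrite !inE bl_rep Hb rep_rep eqxx orbT.
- exists w => //; rewrite /Ts inE; apply/orP; left; rewrite inE; apply/forallP=> u; apply/negP=> Hu.
  by move/existsP: Hno; apply; exists u.
Qed.

Lemma lower n (G : rel 'I_n) (G_irrefl : forall i : 'I_n, ~~ G i i) l :
  has_index_code G l -> #|~: Ts G| <= l.
Proof.
case=> E [D HD].
pose ind (A : {set 'I_n}) : messages n := [ffun v => v \in A].
have Hinj : {in powerset (~: Ts G) &, injective (fun A => E (ind A))}.
  move=> A B; rewrite !inE => HA HB /= HE.
  have Hall : forall v, ind A v = ind B v.
    move=> v; have [t Ht Hvt] := reach_T G_irrefl v.
    have Hts : ind A t = ind B t.
      rewrite !ffunE.
      have -> : (t \in A) = false.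
        by apply/negP=> Ht'; move/subsetP: HA => /(_ t Ht'); rewrite inE Ht.
      have -> : (t \in B) = false.
        by apply/negP=> Ht'; move/subsetP: HB => /(_ t Ht'); rewrite inE Ht.
      by [].
    move/connectP: Hvt => [p Hp Hl]; rewrite Hl in Hts.
    elim: p v Hp {Hl} Hts => [|w p IH] v /=; first by [].
    case/andP => Hvw Hp Hl; have Hw := IH w Hp Hl.
    by rewrite -(HD (ind A) w v Hvw) HE Hw HD.
  apply/setP => v; have := Hall v; rewrite !ffunE => ->; by [].
have := card_in_imset Hinj; rewrite card_powerset => Hc.
have : 2 ^ #|~: Ts G| <= 2 ^ l.
  by rewrite -Hc -[X in _ <= X ^ _]card_bool -card_tuple; apply: max_card.
by rewrite leq_exp2l.
Qed.

Lemma inF n (G : rel 'I_n) k :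
  k \notin leaves G -> ~~ (bl G k && (rep G k == k)) -> k \in ~: Ts G.
Proof. by move=> H1 H2; rewrite in_setC /Ts in_setU negb_or H1 /Rs inE. Qed.

Definition bitf n (G : rel 'I_n) (x : messages n) (j : 'I_n) : bool :=
  x j (+) (bl G j && x (rep G j)).

Lemma upper n (G : rel 'I_n) : has_index_code G #|~: Ts G|.
Proof.
pose F := ~: Ts G.
pose E (x : messages n) := map_tuple (bitf G x) (enum_tuple F).
pose gb (c : #|F|.-tuple bool) (j : 'I_n) := nth false c (index j (enum F)).
have Hgb : forall x j, j \in F -> gb (E x) j = bitf G x j.
  move=> x j Hj; rewrite /gb /E /= (nth_map j) ?nth_index ?index_mem ?mem_enum //.
pose xr i c (xi : bool) := if rep G i == i then xi else gb c i (+) xi.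
exists E.
exists (fun i c xi j => if bl G j then (if rep G j == j then xr i c xi
                                        else gb c j (+) xr i c xi) else gb c j).
move=> x i j Hji.
have Hjnl : j \notin leaves G.
  by rewrite inE; apply/negP=> /forallP /(_ i); rewrite Hji.
case: (boolP (bl G j)) => Hb.
- have Es := bl_closed Hb Hji.
  have Er : rep G i = rep G j by apply: rep_eq.
  have Hbi : bl G i by rewrite /bl Es.
  have Hxr : xr i (E x) (x i) = x (rep G i).
    rewrite /xr; case: eqP => [-> //|Hne].
    rewrite Hgb; last first.
      by apply: inF (bl_notleaf Hbi) _; rewrite Hbi; apply/eqP.
    by rewrite /bitf Hbi /=; case: (x i); case: (x (rep G i)).
  rewrite Hxr Er; case: eqP => [-> //|Hne].
  rewrite Hgb; last first.
    by apply: inF Hjnl _; rewrite Hb; apply/eqP.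
  by rewrite /bitf Hb /=; case: (x j); case: (x (rep G j)).
- rewrite Hgb; first by rewrite /bitf (negbTE Hb) addbF.
  by apply: inF Hjnl _; rewrite (negbTE Hb).
Qed.

Theorem corollary1 (n : nat) (G : rel 'I_n)
    (G_irrefl : forall i : 'I_n, ~~ G i i) :
  is_min_code_length G (n - #|leaves G| - N_SCC G).
Proof.
rewrite -card_F; split; first exact: upper.
by move=> l; apply: lower.
Qed.
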